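(* Let $(\ell,\ell')$ be a pair of transverse Lagrangian planes in $(\mathbb{R}^{2n},\omega)$ and let $X_\ell\subset\ell$ be a centered (non-degenerate) ellipsoid in $\ell$, with Lagrangian polar dual $X^o_{\ell'}\subset\ell'$. Let $K=X_\ell\times X^o_{\ell'}:=\{z+z': z\in X_\ell,\ z'\in X^o_{\ell'}\}\subset\mathbb{R}^{2n}$. Then: (i) there exists $S\in\mathrm{Sp}(n)$ such that the John ellipsoid of $K$ is $S(B^{2n}(1))$; (ii) $c^{\mathrm{lin}}_{\min}(K)=\pi$.
   Context: Write $z=(x,p)\in\mathbb{R}^{2n}$, $\omega((x,p),(x',p'))=p\cdot x'-p'\cdot x$. $\mathrm{Sp}(n)$ is the group of linear automorphisms preserving $\omega$. A Lagrangian plane is an $n$-dimensional subspace on which $\omega$ vanishes; $\ell,\ell'$ are transverse if $\ell\cap\ell'=0$. For a centrally symmetric convex body $X_\ell\subset\ell$, its Lagrangian polar dual in $\ell'$ is $X^o_{\ell'}=\{z'\in\ell':\omega(z,z')\le1\ \forall z\in X_\ell\}$. The John ellipsoid of a convex body is the unique maximal-volume ellipsoid contained in it. $B^{2n}(R)$ is the closed centered Euclidean ball of radius $R$. $c^{\mathrm{lin}}_{\min}(\Omega)=\sup\{\pi R^2: S(B^{2n}(z_0,R))\subset\Omega,\ S\in\mathrm{Sp}(n),\ z_0\in\mathbb{R}^{2n}\}$, where $B^{2n}(z_0,R)$ is the ball centered at $z_0$. *)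

(* Defs.v *)
From HB Require Import structures.
From mathcomp Require Import all_boot all_order all_algebra.
From mathcomp Require Import all_classical all_reals all_analysis.
Set Implicit Arguments. Unset Strict Implicit. Unset Printing Implicit Defensive.
Import Order.TTheory GRing.Theory Num.Theory.
Local Open Scope ring_scope.
Local Open Scope classical_set_scope.

Section Defs.
Variables (R : realType) (n : nat).

(* Points z = (x,p) of R^{2n} are row vectors row_mx x p : 'rV_(n+n). *)
Definition xpart (z : 'rV[R]_(n + n)) : 'rV[R]_n := lsubmx z.
Definition ppart (z : 'rV[R]_(n + n)) : 'rV[R]_n := rsubmx z.

Definition dotv (u v : 'rV[R]_n) : R := \sum_(i < n) u 0 i * v 0 i.

Definition omega (z z' : 'rV[R]_(n + n)) : R :=
  dotv (ppart z) (xpart z') - dotv (ppart z') (xpart z).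

Definition sqnorm m (u : 'rV[R]_m) : R := \sum_(i < m) u 0 i ^+ 2.

Definition symplectic (S : 'M[R]_(n + n)) : Prop :=
  S \in unitmx /\ forall z z', omega (z *m S) (z' *m S) = omega z z'.

Definition lagrangian (L : 'M[R]_(n + n)) : Prop :=
  \rank L = n /\
  forall z z' : 'rV[R]_(n + n), (z <= L)%MS -> (z' <= L)%MS -> omega z z' = 0.

Definition transverse (L L' : 'M[R]_(n + n)) : Prop := \rank (L :&: L')%MS = 0%N.

Definition centered_ellipsoid_in (L : 'M[R]_(n + n)) (X : set 'rV[R]_(n + n)) : Prop :=
  exists A : 'M[R]_(n, n + n),
    (A == L)%MS /\ X = [set u *m A | u in [set u : 'rV[R]_n | sqnorm u <= 1]].

Definition lag_polar (X : set 'rV[R]_(n + n)) (L' : 'M[R]_(n + n)) : set 'rV[R]_(n + n) :=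
  [set z' | (z' <= L')%MS /\ forall z, X z -> omega z z' <= 1].

Definition lag_prod (X Y : set 'rV[R]_(n + n)) : set 'rV[R]_(n + n) :=
  [set z | exists2 x, X x & exists2 y, Y y & z = x + y].

Definition ellipsoid (c : 'rV[R]_(n + n)) (A : 'M[R]_(n + n)) : set 'rV[R]_(n + n) :=
  [set c + u *m A | u in [set u : 'rV[R]_(n + n) | sqnorm u <= 1]].

(* (c,A) parametrizes the unique maximal-volume ellipsoid contained in K;
   the volume of c + A(B) is |det A| vol(B). *)
Definition max_vol_ellipsoid (K : set 'rV[R]_(n + n)) (c : 'rV[R]_(n + n))
    (A : 'M[R]_(n + n)) : Prop :=
  A \in unitmx /\ ellipsoid c A `<=` K /\
  forall c' A', A' \in unitmx -> ellipsoid c' A' `<=` K ->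
    `|\det A'| <= `|\det A| /\
    (`|\det A'| = `|\det A| -> ellipsoid c' A' = ellipsoid c A).

Definition john_ellipsoid_of (K E : set 'rV[R]_(n + n)) : Prop :=
  exists c A, E = ellipsoid c A /\ max_vol_ellipsoid K c A.

Definition sp_ball_image (S : 'M[R]_(n + n)) (z0 : 'rV[R]_(n + n)) (r : R) :=
  [set (z0 + v) *m S | v in [set v : 'rV[R]_(n + n) | sqnorm v <= r ^+ 2]].

Definition c_lin_min (Om : set 'rV[R]_(n + n)) : R :=
  sup [set a : R | exists S z0 r, [/\ symplectic S, 0 < r,
         sp_ball_image S z0 r `<=` Om & a = pi * r ^+ 2]].

End Defs.

(* Main.v *)
Require Import Defs.
From HB Require Import structures.
From mathcomp Require Import all_boot all_order all_algebra.
From mathcomp Require Import all_classical all_reals all_analysis.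
Import Order.TTheory GRing.Theory Num.Theory.
Local Open Scope ring_scope.
Local Open Scope classical_set_scope.

Lemma sqnormE (R : realType) m (v : 'rV[R]_m) : sqnorm v = (v *m v^T) 0 0.
Proof. rewrite /sqnorm mxE; apply: eq_bigr => i _; by rewrite mxE expr2. Qed.

Lemma sqnorm_ge0 (R : realType) m (v : 'rV[R]_m) : 0 <= sqnorm v.
Proof. by apply: sumr_ge0 => i _; rewrite sqr_ge0. Qed.

Lemma sqnorm_eq0 (R : realType) m (v : 'rV[R]_m) : sqnorm v = 0 -> v = 0.
Proof.
move=> /eqP; rewrite psumr_eq0 => [/allP H|i _]; last by rewrite sqr_ge0.
apply/matrixP => i j; rewrite ord1 mxE; apply/eqP.
by rewrite -sqrf_eq0; apply: (implyP (H j (mem_index_enum _))).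
Qed.

Lemma sqnorm_gt0 (R : realType) m (v : 'rV[R]_m) : v != 0 -> 0 < sqnorm v.
Proof.
move=> nz; rewrite lt_def sqnorm_ge0 andbT; apply/eqP => /sqnorm_eq0 h.
by rewrite h eqxx in nz.
Qed.
Definition PD (R : realType) m (G : 'M[R]_m) :=
  forall x : 'rV_m, x != 0 -> 0 < (x *m G *m x^T) 0 0.
Arguments PD {R m} G.

Lemma schur_fact (R : realType) m (al : R) (b : 'M[R]_(1, m)) (D : 'M[R]_m) :
  al != 0 ->
  block_mx al%:M b b^T D =
  block_mx 1%:M 0 (al^-1 *: b^T) 1%:M *m
  block_mx al%:M 0 0 (D - al^-1 *: (b^T *m b)) *m
  (block_mx 1%:M 0 (al^-1 *: b^T) 1%:M)^T.
Proof.
move=> nz.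
rewrite tr_block_mx !trmx1 trmx0 !mulmx_block !mulmx0 !mul0mx !mulmx1 !mul1mx !addr0 !add0r.
rewrite -!scalemxAl mul_mx_scalar scalerA mulVf // scale1r.
rewrite linearZ /= trmxK mul_scalar_mx scalerA mulfV // scale1r.
rewrite -scalemxAl -scalemxAr !scalerA mulVf // mul1r.
by rewrite addrC subrK.
Qed.

From mathcomp Require Import ring lra.

Lemma hadamard (R : realType) m (G : 'M[R]_m) :
  G^T = G -> PD G -> (forall j, G j j <= 1) ->
  0 < \det G /\ \det G <= 1 /\ (\det G = 1 -> G = 1%:M).
Proof.
elim: m G => [|m IH] G Gs Gp Gd.
  by rewrite det_mx00; split=> //; split=> // _; apply/matrixP => [[]].
move: G Gs Gp Gd; rewrite -[m.+1]add1n => G Gs Gp Gd.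
have [al [b [D [GE DT]]]] : exists al b D, G = block_mx al%:M b b^T D /\ D^T = D.
  exists (ulsubmx G 0 0), (ursubmx G), (drsubmx G).
  have h := Gs; rewrite -(submxK G) tr_block_mx in h.
  case/eq_block_mx: h => _ _ h1 h2; split; last exact: h2.
  by rewrite -mx11_scalar h1 submxK.
subst G.
have alp : 0 < al.
  have x0 : (row_mx 1%:M 0 : 'rV[R]_(1 + m)) != 0.
    apply/eqP => /matrixP /(_ 0 (lshift m 0)); rewrite row_mxEl !mxE /=.
    by move/eqP; rewrite oner_eq0.
  have := Gp _ x0; rewrite mul_row_block !mul1mx !mul0mx !addr0 tr_row_mx mul_row_col.
  by rewrite trmx0 mulmx0 addr0 trmx1 mulmx1 mxE eqxx mulr1n.
have al1 : al <= 1.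
  by have := Gd (lshift m 0); rewrite block_mxEul mxE eqxx mulr1n.
have alnz : al != 0 by rewrite gt_eqF.
set D' := D - al^-1 *: (b^T *m b).
set Lo := block_mx 1%:M 0 (al^-1 *: b^T) 1%:M : 'M[R]_(1 + m).
set Dg := block_mx al%:M 0 0 D' : 'M[R]_(1 + m).
have GE : block_mx al%:M b b^T D = Lo *m Dg *m Lo^T by exact: schur_fact.
have detE : \det (block_mx al%:M b b^T D) = al * \det D'.
  by rewrite GE !det_mulmx det_tr /Lo /Dg det_lblock det_ublock !det1 det_mx11 mxE eqxx mulr1n !mul1r mulr1.
have D's : D'^T = D'.
  by rewrite /D' linearD linearN /= linearZ /= trmx_mul trmxK DT.
have D'p : PD D'.
  move=> y y0.
  set Li := block_mx 1%:M 0 (- (al^-1 *: b^T)) 1%:M : 'M[R]_(1 + m).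
  have LiLo : Li *m Lo = 1%:M.
    rewrite mulmx_block !mulmx0 !mul0mx !mulmx1 !mul1mx !addr0 add0r.
    by rewrite addrC subrr -scalar_mx_block.
  set x := row_mx 0 y *m Li.
  have xLo : x *m Lo = row_mx 0 y by rewrite /x -mulmxA LiLo mulmx1.
  have x0 : x != 0.
    apply/eqP => xe; move: xLo; rewrite xe mul0mx => /esym /eqP.
    by rewrite -row_mx0 => /eqP /eq_row_mx [_ /eqP]; rewrite (negPf y0).
  have := Gp _ x0; rewrite GE !mulmxA xLo -mulmxA -trmx_mul xLo.
  rewrite mul_row_block !mul0mx !add0r tr_row_mx mul_row_col trmx0 mulmx0 add0r.
  done.
have D'd : forall j, D' j j <= 1 /\ D' j j = D j j - al^-1 * (b 0 j ^+ 2).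
  move=> j; have e : D' j j = D j j - al^-1 * (b 0 j ^+ 2).
    by rewrite /D' !mxE big_ord1 !mxE expr2.
  split => //; rewrite e; have := Gd (rshift 1 j); rewrite block_mxEdr => h.
  apply: le_trans h; rewrite lerBlDr lerDl mulr_ge0 ?sqr_ge0 // invr_ge0 ltW //.
have [dp [d1 deq]] := IH D' D's D'p (fun j => (D'd j).1).
rewrite detE; split; first exact: mulr_gt0.
split; first by nra.
move=> h.
have al1' : al = 1 by nra.
have d1' : \det D' = 1 by nra.
have D'1 := deq d1'.
have b0 : b = 0.
  apply/matrixP => i j; rewrite ord1 mxE.
  have [_ e] := D'd j; move: e; rewrite D'1 al1' invr1 mul1r mxE eqxx mulr1n => e.
  have := Gd (rshift 1 j); rewrite block_mxEdr => h2.
  have : b 0 j ^+ 2 <= 0 by lra.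
  by rewrite le_eqVlt ltNge sqr_ge0 orbF sqrf_eq0 => /eqP.
have D1 : D = 1%:M by move: D'1; rewrite /D' b0 mulmx0 scaler0 subr0.
by rewrite b0 D1 al1' trmx0 -scalar_mx_block.
Qed.

Lemma col_bound (R : realType) m (cj : R) (a : 'rV[R]_m) :
  (forall u : 'rV_m, sqnorm u <= 1 -> (cj + \sum_i u 0 i * a 0 i) ^+ 2 <= 1) ->
  sqnorm a <= 1 /\ (sqnorm a = 1 -> cj = 0).
Proof.
move=> H; set s := sqnorm a.
have s0 : 0 <= s := sqnorm_ge0 _ _ a.
set t := 2 / (1 + s).
have t0 : 0 <= t by rewrite divr_ge0 // addr_ge0.
have ps : 0 < 1 + s by lra.
have ts : t * (1 + s) = 2 by rewrite /t divfK // gt_eqF.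
have tts : t ^+ 2 * s <= 1.
  have e : t ^+ 2 * s * (1 + s) ^+ 2 = 4 * s .
    have -> : t ^+ 2 * s * (1 + s) ^+ 2 = (t * (1 + s)) ^+ 2 * s by ring.
    by rewrite ts; ring.
  have h1 : 0 < (1 + s) ^+ 2 by rewrite exprn_gt0.
  rewrite -(ler_pM2r h1) mul1r e; have := sqr_ge0 (1 - s); lra.
have su : forall r : R, sqnorm (r *: a) = r ^+ 2 * s.
  move=> r; rewrite /sqnorm /s /sqnorm mulr_sumr; apply: eq_bigr => i _; rewrite mxE; lra.
have pu : forall r : R, \sum_i (r *: a) 0 i * a 0 i = r * s.
  move=> r; rewrite /s /sqnorm mulr_sumr; apply: eq_bigr => i _; rewrite mxE; lra.
have h1 := H (t *: a); rewrite su pu in h1; have {}h1 := h1 tts.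
have h2 := H ((- t) *: a); rewrite su pu sqrrN in h2; have {}h2 := h2 tts.
split.
  have e1 : (cj + t * s) ^+ 2 + (cj + - t * s) ^+ 2 = 2 * cj ^+ 2 + 2 * (t * s) ^+ 2 by ring.
  have h3 : (t * s) ^+ 2 <= 1 by have := sqr_ge0 cj; lra.
  have h4 : t * s <= 1.
    move: h3; move: (t * s) => x h3; rewrite leNgt; apply/negP => h5.
    have h6 : 0 <= (x - 1) ^+ 2 := sqr_ge0 _.
    have e2 : (x - 1) ^+ 2 = x ^+ 2 - 2 * x + 1 by ring.
    lra.
  have : t * s * (1 + s) <= 1 + s by nra.
  rewrite mulrAC ts; lra.
move=> s1; have t1 : t = 1 by move: ts; rewrite s1; lra.
move: h1 h2; rewrite t1 s1 !mul1r => h1 h2.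
have e1 : (cj + 1) ^+ 2 + (cj + - 1) ^+ 2 = 2 * cj ^+ 2 + 2 by ring.
have : cj ^+ 2 <= 0 by lra.
by rewrite le_eqVlt ltNge sqr_ge0 orbF sqrf_eq0 => /eqP.
Qed.

Lemma mulmx_row_entry (R : realType) m (u : 'rV[R]_m) (M : 'M[R]_m) j :
  (u *m M) 0 j = \sum_i u 0 i * (\row_k M k j) 0 i.
Proof. by rewrite mxE; apply: eq_bigr => i _; rewrite mxE. Qed.

Lemma cube_core (R : realType) m (c : 'rV[R]_m) (M : 'M[R]_m) :
  M \in unitmx ->
  (forall u, sqnorm u <= 1 -> forall j, ((c + u *m M) 0 j) ^+ 2 <= 1) ->
  `|\det M| <= 1 /\ (`|\det M| = 1 -> c = 0 /\ M *m M^T = 1%:M).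
Proof.
move=> Mu H.
have cb : forall j, sqnorm (\row_k M k j) <= 1 /\ (sqnorm (\row_k M k j) = 1 -> c 0 j = 0).
  move=> j; apply: col_bound => u /H /(_ j); by rewrite mxE mulmx_row_entry.
set G := M^T *m M.
have Gs : G^T = G by rewrite /G trmx_mul trmxK.
have Gjj : forall j, G j j = sqnorm (\row_k M k j).
  move=> j; rewrite /G mxE /sqnorm; apply: eq_bigr => i _; rewrite !mxE expr2 //.
have Gp : PD G.
  move=> x x0; rewrite /G mulmxA.
  have : sqnorm (x *m M^T) = (x *m M^T *m M *m x^T) 0 0.
    by rewrite sqnormE trmx_mul trmxK mulmxA.
  move=> <-; apply: sqnorm_gt0; apply: contraNneq x0 => h.
  have Mtu : M^T \in unitmx by rewrite unitmx_tr.
  by rewrite -(mulmxK Mtu x) h mul0mx.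
have Gd : forall j, G j j <= 1 by move=> j; rewrite Gjj; exact: (cb j).1.
have [dp [d1 deq]] := hadamard _ _ G Gs Gp Gd.
have dG : \det G = `|\det M| ^+ 2 by rewrite /G det_mulmx det_tr real_normK ?num_real // expr2.
split.
  have h := normr_ge0 (\det M); rewrite dG in d1.
  rewrite leNgt; apply/negP => h2.
  have e2 : (`|\det M| - 1) ^+ 2 = `|\det M| ^+ 2 - 2 * `|\det M| + 1 by ring.
  have := sqr_ge0 (`|\det M| - 1); lra.
move=> h; have G1 : G = 1%:M by apply: deq; rewrite dG h expr1n.
split; last exact: mulmx1C.
apply/matrixP => i j; rewrite ord1 mxE; apply: (cb j).2.
by rewrite -Gjj G1 mxE eqxx.
Qed.
Definition Jm (R : realType) (n : nat) : 'M[R]_(n + n) :=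
  block_mx 0 (- 1%:M) 1%:M 0.

Lemma omegaE (R : realType) (n : nat) (z z' : 'rV[R]_(n + n)) :
  omega z z' = (z *m Jm R n *m z'^T) 0 0.
Proof.
rewrite -[z]hsubmxK -[z']hsubmxK /Jm mul_row_block !mulmx0 !mulmx1 !addr0 !add0r.
rewrite tr_row_mx mul_row_col /omega /xpart /ppart !row_mxKl !row_mxKr /dotv.
rewrite mulmxN mulmx1 mulNmx [in RHS]mxE [in RHS]mxE [X in _ = _ + X]mxE [X in _ = _ - X]mxE.
congr (_ - _); apply: eq_bigr => i _; rewrite [X in _ = _ * X]mxE // mulrC. by rewrite [rsubmx _ _ _]mxE.
Qed.

Lemma Jm_tr (R : realType) n : (Jm R n)^T = - Jm R n.
Proof.
rewrite /Jm tr_block_mx !trmx0 linearN /= !trmx1.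
by rewrite opp_block_mx !oppr0 opprK.
Qed.

Lemma Jm_orth (R : realType) n : Jm R n *m (Jm R n)^T = 1%:M.
Proof.
rewrite Jm_tr mulmxN /Jm mulmx_block !mulmx0 !mul0mx !addr0 !add0r mulmxN mulNmx !mulmx1.
by rewrite opp_block_mx !opprK oppr0 -scalar_mx_block.
Qed.

Lemma omega_entries (R : realType) n k l (P : 'M[R]_(k, n + n)) (Q : 'M[R]_(l, n + n)) i j :
  (P *m Jm R n *m Q^T) i j = omega (row i P) (row j Q).
Proof.
rewrite omegaE -row_mul mxE [RHS]mxE; apply: eq_bigr => s _.
by rewrite !mxE.
Qed.

Lemma detJ_sq (R : realType) n : \det (Jm R n) ^+ 2 = 1.
Proof. by rewrite expr2 -{2}det_tr -det_mulmx Jm_orth det1. Qed.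

Lemma det_sq_of_mx (R : realType) n (S : 'M[R]_(n + n)) :
  S *m Jm R n *m S^T = Jm R n -> \det S ^+ 2 = 1.
Proof.
move=> h; have e : \det (S *m Jm R n *m S^T) = \det (Jm R n) by rewrite h.
rewrite !det_mulmx det_tr in e.
have hJ : \det (Jm R n) != 0 by apply/eqP => h0; have := detJ_sq R n; rewrite h0 expr0n /= => /eqP; rewrite eq_sym oner_eq0.
apply: (mulIf hJ); by rewrite mul1r -[RHS]e expr2 mulrAC.
Qed.

Arguments det_sq_of_mx {R n S}.

Lemma symp_of_mx (R : realType) n (S : 'M[R]_(n + n)) :
  S *m Jm R n *m S^T = Jm R n -> symplectic S.
Proof.
move=> h; split.
  rewrite unitmxE unitfE; apply/eqP => h0; have := det_sq_of_mx h.
  by rewrite h0 expr0n /= => /eqP; rewrite eq_sym oner_eq0.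
move=> z z'; rewrite !omegaE trmx_mul.
have -> : z *m S *m Jm R n *m (S^T *m z'^T) = z *m (S *m Jm R n *m S^T) *m z'^T by rewrite !mulmxA.
by rewrite h.
Qed.

Lemma mx_of_symp (R : realType) n (S : 'M[R]_(n + n)) :
  symplectic S -> S *m Jm R n *m S^T = Jm R n.
Proof.
move=> [_ h]; apply/matrixP => i j; rewrite omega_entries.
rewrite -(mul1mx S) !row_mul h -omega_entries mul1mx trmx1 mulmx1.
done.
Qed.

Lemma symp_det (R : realType) n (S : 'M[R]_(n + n)) :
  symplectic S -> `|\det S| = 1.
Proof. by move/mx_of_symp/det_sq_of_mx => /eqP; rewrite sqr_norm_eq1 => /eqP. Qed.

Lemma dotE (R : realType) m (u p : 'rV[R]_m) : (u *m p^T) 0 0 = \sum_i u 0 i * p 0 i.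
Proof. by rewrite mxE; apply: eq_bigr => i _; rewrite mxE. Qed.

Lemma sqnormN (R : realType) m (u : 'rV[R]_m) : sqnorm (- u) = sqnorm u.
Proof. by apply: eq_bigr => i _; rewrite mxE sqrrN. Qed.

Lemma dot_le (R : realType) m (u p : 'rV[R]_m) :
  sqnorm u <= 1 -> sqnorm p <= 1 -> - \sum_i u 0 i * p 0 i <= 1.
Proof.
move=> hu hp.
have h : 0 <= \sum_i (u 0 i + p 0 i) ^+ 2 by apply: sumr_ge0 => i _; rewrite sqr_ge0.
have e : \sum_i (u 0 i + p 0 i) ^+ 2 = sqnorm u + 2 * \sum_i u 0 i * p 0 i + sqnorm p.
  rewrite /sqnorm mulr_sumr -!big_split /=; apply: eq_bigr => i _; ring.
lra.
Qed.

Lemma sq_le1 (R : realType) (x : R) : - x <= 1 -> x <= 1 -> x ^+ 2 <= 1.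
Proof.
move=> h1 h2.
have a1 : 0 <= 1 - x by rewrite subr_ge0.
have a2 : 0 <= 1 - - x by rewrite subr_ge0.
have := mulr_ge0 a1 a2.
rewrite (_ : (1 - x) * (1 - - x) = 1 - x ^+ 2); last by ring.
by rewrite subr_ge0.
Qed.

Lemma omegaD2 (R : realType) n (z y1 y2 : 'rV[R]_(n + n)) :
  omega z (y1 + y2) = omega z y1 + omega z y2.
Proof. by rewrite !omegaE linearD /= mulmxDr mxE. Qed.

Definition box (R : realType) n (w : 'rV[R]_(n + n)) : Prop :=
  sqnorm (lsubmx w) <= 1 /\ sqnorm (rsubmx w) <= 1.

Lemma reduction (R : realType) n (L L' : 'M[R]_(n + n)) (X : set 'rV[R]_(n + n)) :
  lagrangian L -> lagrangian L' -> transverse L L' -> centered_ellipsoid_in L X ->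
  exists T : 'M[R]_(n + n), T *m Jm R n *m T^T = Jm R n /\
    lag_prod X (lag_polar X L') = [set w *m T | w in box R n].
Proof.
move=> [rL lagL] [rL' lagL'] tr [A [AL ->]].
set J := Jm R n.
have /andP [AsubL LsubA] := AL.
have AJA : A *m J *m A^T = 0.
  apply/matrixP => i j; rewrite omega_entries mxE; apply: lagL;
  exact: submx_trans (row_sub _ A) AsubL.
set F := J *m A^T.
have full : row_full (L + L')%MS.
  rewrite /row_full; have := mxrank_sum_cap L L'.
  by move: tr; rewrite /transverse => ->; rewrite addn0 rL rL' => ->.
have ker0 : forall z : 'rV_(n + n), (z <= L')%MS -> z *m F = 0 -> z = 0.
  move=> z zL zF.
  have om0 : forall y, omega z y = 0.
    move=> y; have : (y <= L + L')%MS := submx_full _ full.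
    case/sub_addsmxP => [[u1 u2] ->] /=; rewrite omegaD2.
    rewrite (lagL' z (u2 *m L')) ?submxMl // addr0.
    case/submxP: LsubA => D1 ->.
    by rewrite omegaE !trmx_mul !mulmxA -/J -(mulmxA z J) -/F zF !mul0mx mxE.
  apply: (sqnorm_eq0 _ _ z); have := om0 (z *m J).
  by rewrite omegaE trmx_mul mulmxA -(mulmxA z) Jm_orth mulmx1 -sqnormE.
have Kc : (L' :&: kermx F)%MS = 0.
  apply/row_matrixP => i; rewrite row0; apply: ker0.
    exact: submx_trans (row_sub _ _) (capmxSl _ _).
  apply/sub_kermxP; exact: submx_trans (row_sub _ _) (capmxSr _ _).
have rF : row_full (L' *m F).
  rewrite /row_full; have := mxrank_mul_ker L' F.
  by rewrite Kc mxrank0 addn0 rL' => ->.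
case/row_fullP: rF => D0 hD.
set B := D0 *m L'.
have BF : B *m F = 1%:M by rewrite /B -mulmxA.
have BsubL' : (B <= L')%MS by apply: submxMl.
have BJB : B *m J *m B^T = 0.
  apply/matrixP => i j; rewrite omega_entries mxE; apply: lagL';
  exact: submx_trans (row_sub _ B) BsubL'.
have BJA : B *m J *m A^T = 1%:M by rewrite -mulmxA.
have AJB : A *m J *m B^T = - 1%:M.
  have := congr1 trmx BJA; rewrite !trmx_mul trmxK trmx1 Jm_tr mulNmx mulmxN.
  by move=> <-; rewrite opprK mulmxA.
set T := col_mx A B.
exists T; split.
  by rewrite /T tr_col_mx mul_col_mx mul_col_row AJA AJB BJA BJB.
have omAB : forall u p : 'rV_n, omega (u *m A) (p *m B) = - \sum_i u 0 i * p 0 i.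
  move=> u p; rewrite omegaE -/J.
  rewrite (_ : u *m A *m J *m (p *m B)^T = u *m (A *m J *m B^T) *m p^T); last by rewrite trmx_mul !mulmxA.
  by rewrite AJB mulmxN mulmx1 mulNmx mxE dotE.
have L'B : (L' <= B)%MS.
  have e := (mxrank_leqif_sup BsubL').2.
  have rB1 : (\rank B <= n)%N by rewrite -[X in (_ <= X)%N]rL' mxrankS.
  have rB2 : (n <= \rank B)%N by have := mxrankM_maxl B F; rewrite BF mxrank1.
  by rewrite -e rL' eqn_leq rB1 rB2.
have polE : lag_polar [set u *m A | u in [set u | sqnorm u <= 1]] L' =
            [set p *m B | p in [set p | sqnorm p <= 1]].
  apply/seteqP; split.
    move=> z' [z'L H].
    have /submxP [p zE] : (z' <= B)%MS := submx_trans z'L L'B.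
    rewrite zE in H *.
    exists p => //=.
    apply: (proj1 (@col_bound R n 0 p _)) => u hu; rewrite add0r.
    apply: sq_le1.
      by rewrite -omAB; apply: H; exists u.
    have := H ((- u) *m A); rewrite omAB.
    have -> : \sum_i (- u) 0 i * p 0 i = - \sum_i u 0 i * p 0 i.
      by rewrite -sumrN; apply: eq_bigr => i _; rewrite mxE mulNr.
    rewrite opprK; apply; exists (- u) => //=; by rewrite sqnormN.
  move=> _ [p hp <-]; split.
    exact: submx_trans (submxMl _ _) BsubL'.
  by move=> _ [u hu <-]; rewrite omAB; apply: dot_le.
rewrite polE; apply/seteqP; split.
  move=> _ [_ [u hu <-] [_ [p hp <-] ->]].
  exists (row_mx u p); first by rewrite /box row_mxKl row_mxKr.
  by rewrite /T mul_row_col.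
move=> _ [w [h1 h2] <-].
exists (lsubmx w *m A); first by exists (lsubmx w).
exists (rsubmx w *m B); first by exists (rsubmx w).
by rewrite -{1}(hsubmxK w) /T mul_row_col.
Qed.

Lemma sqnorm_split (R : realType) n (w : 'rV[R]_(n + n)) :
  sqnorm w = sqnorm (lsubmx w) + sqnorm (rsubmx w).
Proof. by rewrite /sqnorm big_split_ord /=; congr (_ + _); apply: eq_bigr => i _; rewrite mxE. Qed.

Lemma term_le_sqnorm (R : realType) m (v : 'rV[R]_m) k : v 0 k ^+ 2 <= sqnorm v.
Proof. by rewrite /sqnorm (bigD1 k) //= lerDl sumr_ge0 // => i _; rewrite sqr_ge0. Qed.

Lemma box_coord (R : realType) n (w : 'rV[R]_(n + n)) j : box R n w -> (w 0 j) ^+ 2 <= 1.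
Proof.
move=> [h1 h2]; case: (splitP j) => k jk.
  have -> : j = lshift n k by apply: val_inj.
  by apply: le_trans h1; rewrite (_ : w 0 (lshift n k) = lsubmx w 0 k) ?term_le_sqnorm // mxE.
have -> : j = rshift n k by apply: val_inj.
by apply: le_trans h2; rewrite (_ : w 0 (rshift n k) = rsubmx w 0 k) ?term_le_sqnorm // mxE.
Qed.

Lemma sqnorm_orth (R : realType) m (u : 'rV[R]_m) (M : 'M[R]_m) :
  M *m M^T = 1%:M -> sqnorm (u *m M) = sqnorm u.
Proof. by move=> h; rewrite !sqnormE trmx_mul mulmxA -(mulmxA u) h mulmx1. Qed.

Lemma maxvol (R : realType) n (T : 'M[R]_(n + n)) : T \in unitmx ->
  forall c' A', A' \in unitmx -> ellipsoid c' A' `<=` [set w *m T | w in box R n] ->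
  `|\det A'| <= `|\det T| /\ (`|\det A'| = `|\det T| -> ellipsoid c' A' = ellipsoid 0 T).
Proof.
move=> Tu c' A' A'u sub.
set Ti := invmx T; set M := A' *m Ti; set c := c' *m Ti.
have Mu : M \in unitmx by rewrite unitmx_mul A'u unitmx_inv.
have H : forall u, sqnorm u <= 1 -> forall j, ((c + u *m M) 0 j) ^+ 2 <= 1.
  move=> u hu j.
  have [w wb wE] : [set w *m T | w in box R n] (c' + u *m A') by apply: sub; exists u.
  have -> : c + u *m M = w by rewrite /c /M mulmxA -mulmxDl -wE /Ti mulmxK.
  exact: box_coord.
have [d1 deq] := cube_core _ _ _ _ Mu H.
have A'E : A' = M *m T by rewrite /M /Ti mulmxKV.
have dA : `|\det A'| = `|\det M| * `|\det T| by rewrite A'E det_mulmx normrM.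
have dT : 0 < `|\det T| by rewrite normr_gt0 -unitfE -unitmxE.
split.
  by rewrite dA ler_piMl.
move=> e; have dM : `|\det M| = 1.
  by apply: (mulIf (lt0r_neq0 dT)); rewrite -dA e mul1r.
have [c0 MM] := deq dM.
have c'0 : c' = 0 by rewrite -(mulmxKV Tu c') -/Ti -/c c0 mul0mx.
have MtM : M^T *m M = 1%:M := mulmx1C MM.
apply/seteqP; split.
  move=> _ [u hu <-]; exists (u *m M); first by rewrite /= (sqnorm_orth _ _ _ _ MM).
  by rewrite c'0 !add0r -mulmxA -A'E.
move=> _ [v hv <-]; exists (v *m M^T).
  by rewrite /= (sqnorm_orth _ _ _ M^T) // trmxK.
rewrite c'0 !add0r.
have -> : v *m M^T *m A' = v *m (M^T *m M) *m T.
  by rewrite -[RHS]mulmxA -(mulmxA M^T M T) -A'E mulmxA.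
by rewrite MtM mulmx1.
Qed.

Lemma sqnormZ (R : realType) m (r : R) (u : 'rV[R]_m) : sqnorm (r *: u) = r ^+ 2 * sqnorm u.
Proof. by rewrite /sqnorm mulr_sumr; apply: eq_bigr => i _; rewrite mxE exprMn. Qed.

Theorem mainTheorem7 (R : realType) (n : nat) (L L' : 'M[R]_(n + n))
    (X : set 'rV[R]_(n + n)) :
  (0 < n)%N -> lagrangian L -> lagrangian L' -> transverse L L' ->
  centered_ellipsoid_in L X ->
  let K := lag_prod X (lag_polar X L') in
  (exists S : 'M[R]_(n + n),
      symplectic S /\ john_ellipsoid_of K (ellipsoid 0 S)) /\
  c_lin_min K = pi.
Proof.
move=> n0 lagL lagL' tr Xe K.
have [T [TJ KE]] := reduction _ _ _ _ _ lagL lagL' tr Xe.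
have Ts := symp_of_mx _ _ _ TJ.
have Tu := Ts.1.
have dT := symp_det _ _ _ Ts.
rewrite /K KE.
have inK : ellipsoid 0 T `<=` [set w *m T | w in box R n].
  move=> _ [u hu <-]; exists u; last by rewrite add0r.
  have := sqnorm_split _ _ u; have := sqnorm_ge0 _ _ (lsubmx u); have := sqnorm_ge0 _ _ (rsubmx u).
  rewrite /box; move: hu => /= hu; lra.
split.
  exists T; split => //; exists 0, T; split => //; split => //; split => //.
  by move=> c' A' A'u sub; apply: (maxvol _ _ _ Tu).
rewrite /c_lin_min; set E := [set a : R | _].
have ub : ubound E pi.
  move=> a [S [z0 [r [Ss r0 sub ->]]]].
  set A' := r *: S.
  have Su := Ss.1.
  have A'u : A' \in unitmx.
    have dS : \det S != 0 by rewrite -normr_eq0 (symp_det _ _ _ Ss) oner_eq0.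
    rewrite unitmxE detZ unitfE mulf_neq0 // expf_neq0 //; by apply/eqP => h; rewrite h ltxx in r0.
  have sub' : ellipsoid (z0 *m S) A' `<=` [set w *m T | w in box R n].
    move=> _ [u hu <-]; apply: sub; exists (r *: u).
      by rewrite /= sqnormZ; rewrite /= in hu; rewrite -[X in _ <= X]mulr1 ler_wpM2l // sqr_ge0.
    by rewrite mulmxDl /A' -scalemxAl -scalemxAr.
  have [h _] := maxvol _ _ _ Tu _ _ A'u sub'.
  have r0' : 0 <= r by exact: ltW.
  move: h; rewrite dT /A' detZ normrM (symp_det _ _ _ Ss) mulr1 normrX (ger0_norm r0').
  rewrite expr_le1 // ?addn_gt0 ?n0 // => r1.
  have r2 : r ^+ 2 <= 1 by rewrite expr_le1.
  by rewrite -[X in _ <= X]mulr1 ler_wpM2l // ltW // pi_gt0.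
have mem : E pi.
  exists T, 0, 1; split => //.
    move=> _ [v hv <-]; apply: inK; exists v; first by rewrite /= -(expr1n R 2).
    by rewrite add0r add0r.
  by rewrite expr1n mulr1.
apply/le_anti/andP; split.
  by apply: ge_sup => //; exists pi.
by apply: ub_le_sup => //; exists pi.
Qed.
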